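(* If $G$ is a finitely generated group of exponential growth, then $\mathrm{WP}_G\notin\mathrm{DTIME}_1(o(n^2))$.
   Context: $\mathrm{WP}_G$ is the word problem $\{w\in S^{*}: w=_G e\}$ for a finite symmetric generating set $S$. $\mathrm{DTIME}_1(o(n^2))$ is the class of languages decided by a deterministic single-tape Turing machine in time $o(n^2)$. $G$ has exponential growth if its growth function $\gamma(n)=\#\{g: l_S(g)\le n\}$ satisfies $\gamma(n)\ge a^n$ for some $a>1$ and all $n$. *)

(* Defs.v *)
From mathcomp Require Import all_boot.
From mathcomp Require Import monoid.
From Stdlib Require Import Reals.

Set Implicit Arguments.
Unset Strict Implicit.
Unset Printing Implicit Defensive.

Local Open Scope group_scope.

Section Words.
Variables (G : groupType) (Sigma : finType) (ev : Sigma -> G).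

Definition word_eval (w : seq Sigma) : G := foldr (fun s g => ev s * g) 1 w.

Definition symmetric_gen : Prop := forall s : Sigma, exists s' : Sigma, ev s' = (ev s)^-1.
Definition generating : Prop := forall g : G, exists w : seq Sigma, word_eval w = g.
Definition finite_symmetric_generating_set : Prop :=
  injective ev /\ symmetric_gen /\ generating.

Fixpoint words_of_length (k : nat) : seq (seq Sigma) :=
  match k with
  | 0 => [:: [::]]
  | k'.+1 => [seq x :: w | x <- enum Sigma, w <- words_of_length k']
  end.
Definition words_upto (n : nat) : seq (seq Sigma) :=
  flatten [seq words_of_length k | k <- iota 0 n.+1].

Definition growth (n : nat) : nat := size (undup [seq word_eval w | w <- words_upto n]).

Definition exponential_growth : Prop :=
  exists a : R, (1 < a)%R /\ forall n : nat, (a ^ n <= INR (growth n))%R.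

Definition word_problem : pred (seq Sigma) := fun w => word_eval w == 1.
End Words.

(* Deterministic single-tape Turing machines (two-way infinite tape).  *)

Inductive move := MoveL | MoveR | MoveN.

Record TM (Sigma : finType) := {
  tm_state : finType;
  tm_tape : finType;
  tm_inp : Sigma -> tm_tape;
  tm_blank : tm_tape;
  tm_start : tm_state;
  tm_acc : tm_state;
  tm_rej : tm_state;
  tm_delta : tm_state -> tm_tape -> tm_state * tm_tape * move
}.
Arguments tm_inp {Sigma} t _.
Arguments tm_blank {Sigma} t.
Arguments tm_start {Sigma} t.
Arguments tm_acc {Sigma} t.
Arguments tm_rej {Sigma} t.
Arguments tm_delta {Sigma} t _ _.

Definition TM_wf (Sigma : finType) (M : TM Sigma) : Prop :=
  injective (tm_inp M) /\ (forall s, tm_inp M s != tm_blank M) /\ tm_acc M != tm_rej M.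

Section TMsem.
Variables (Sigma : finType) (M : TM Sigma).

(* configuration: state, left part of the tape (nearest cell first),
   scanned symbol, right part of the tape (nearest cell first);
   cells outside the lists are blank *)
Definition config : Type :=
  (tm_state M * seq (tm_tape M) * tm_tape M * seq (tm_tape M))%type.

Definition halting (q : tm_state M) : bool := (q == tm_acc M) || (q == tm_rej M).

Definition step (c : config) : config :=
  let: (q, l, a, r) := c in
  if halting q then c else
  let: (q', b, m) := tm_delta M q a in
  match m with
  | MoveL => (q', behead l, head (tm_blank M) l, b :: r)
  | MoveR => (q', b :: l, head (tm_blank M) r, behead r)
  | MoveN => (q', l, b, r)
  end.

Definition init_config (w : seq Sigma) : config :=
  let t := map (tm_inp M) w in
  (tm_start M, [::], head (tm_blank M) t, behead t).

Definition run (t : nat) (w : seq Sigma) : config := iter t step (init_config w).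

Definition config_state (c : config) : tm_state M := let: (q, _, _, _) := c in q.

Definition decides_in_time (L : pred (seq Sigma)) (T : nat -> nat) : Prop :=
  forall w : seq Sigma,
    config_state (run (T (size w)) w) = if L w then tm_acc M else tm_rej M.
End TMsem.

Definition little_o_n2 (T : nat -> nat) : Prop :=
  forall k : nat, exists N : nat, forall n : nat, N <= n -> k * T n <= n ^ 2.

Definition DTIME1_o_n2 (Sigma : finType) (L : pred (seq Sigma)) : Prop :=
  exists M : TM Sigma, TM_wf M /\
    exists T : nat -> nat, little_o_n2 T /\ decides_in_time M L T.

(* Main.v *)
Require Import Defs.
From mathcomp Require Import all_boot.
From mathcomp Require Import monoid zify.
From Stdlib Require Import Reals ZArith Lia Lra FunctionalExtensionality.
Set Implicit Arguments. Unset Strict Implicit. Unset Printing Implicit Defensive.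

Section Abs.
Variables (Sigma : finType) (M : TM Sigma).
Local Notation Q := (tm_state M).
Local Notation Gm := (tm_tape M).
Local Notation bl := (tm_blank M).

Record aconf := AC { aq : Q; ah : Z; af : Z -> Gm }.

Definition mv m := match m with MoveL => (-1)%Z | MoveR => 1%Z | MoveN => 0%Z end.
Definition upd (f : Z -> Gm) h b := fun p => if Z.eqb p h then b else f p.
Definition astep (c : aconf) : aconf :=
  if halting (aq c) then c else
  let: (q', b, m) := tm_delta M (aq c) (af c (ah c)) in
  AC q' (ah c + mv m)%Z (upd (af c) (ah c) b).

Definition tapeof (l : seq Gm) (a : Gm) r (h p : Z) : Gm :=
  if Z.eqb p h then a else if Z.ltb p h then nth bl l (Z.to_nat (h - p - 1))
  else nth bl r (Z.to_nat (p - h - 1)).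
Definition absc (c : config M) (h : Z) : aconf :=
  let: (q, l, a, r) := c in AC q h (tapeof l a r h).

Lemma abs_step c h : exists h', astep (absc c h) = absc (step c) h'.
Proof.
case: c => [[[q l] a] r]; rewrite /astep /absc /step /=.
case: (halting q); first by exists h.
have Ht : tapeof l a r h h = a by rewrite /tapeof Z.eqb_refl.
rewrite {}Ht; case: (tm_delta M q a) => [[q' b] m].
case: m => /=.
- exists (h - 1)%Z; congr AC.
  apply: functional_extensionality => p; rewrite /upd /tapeof.
  case: (Z.eqb_spec p h) => [->|Hph].
  + have -> : (h =? h - 1)%Z = false by apply/Z.eqb_neq; lia.
    have -> : (h <? h - 1)%Z = false by apply/Z.ltb_ge; lia.
    by have -> : Z.to_nat (h - (h - 1) - 1) = 0%nat by lia.
  case: (Z.eqb_spec p (h-1)) => [->|Hp1].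
  + have -> : ((h - 1 <? h) = true)%Z by apply/Z.ltb_lt; lia.
    have -> : Z.to_nat (h - (h - 1) - 1) = 0%nat by lia.
    by case: l => [|? ?]; rewrite ?nth_nil.
  case: (Z.ltb_spec p h) => Hlt.
  + have -> : (p <? h - 1)%Z = true by apply/Z.ltb_lt; lia.
    have -> : Z.to_nat (h - p - 1) = (Z.to_nat (h - 1 - p - 1)).+1 by lia.
    by case: l => [|? ?]; rewrite ?nth_nil.
  + have -> : (p <? h - 1)%Z = false by apply/Z.ltb_ge; lia.
    by have -> : Z.to_nat (p - (h - 1) - 1) = (Z.to_nat (p - h - 1)).+1 by lia.
- exists (h + 1)%Z; congr AC.
  apply: functional_extensionality => p; rewrite /upd /tapeof.
  case: (Z.eqb_spec p h) => [->|Hph].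
  + have -> : (h =? h + 1)%Z = false by apply/Z.eqb_neq; lia.
    have -> : (h <? h + 1)%Z = true by apply/Z.ltb_lt; lia.
    by have -> : Z.to_nat (h + 1 - h - 1) = 0%nat by lia.
  case: (Z.eqb_spec p (h+1)) => [->|Hp1].
  + have -> : ((h + 1 <? h) = false)%Z by apply/Z.ltb_ge; lia.
    have -> : Z.to_nat (h + 1 - h - 1) = 0%nat by lia.
    by case: r => [|? ?]; rewrite ?nth_nil.
  case: (Z.ltb_spec p h) => Hlt.
  + have -> : (p <? h + 1)%Z = true by apply/Z.ltb_lt; lia.
    by have -> : Z.to_nat (h + 1 - p - 1) = (Z.to_nat (h - p - 1)).+1 by lia.
  + have -> : (p <? h + 1)%Z = false by apply/Z.ltb_ge; lia.
    have -> : Z.to_nat (p - h - 1) = (Z.to_nat (p - (h + 1) - 1)).+1 by lia.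
    by case: r => [|? ?]; rewrite ?nth_nil.
- exists h; congr AC.
  lia. apply: functional_extensionality => p; rewrite /upd /tapeof.
  by case: (Z.eqb_spec p h) => Hph.
Qed.

Definition ainit (w : seq Sigma) : aconf :=
  AC (tm_start M) 0%Z (fun p => if (0 <=? p)%Z then nth bl (map (tm_inp M) w) (Z.to_nat p) else bl).
Definition arun (t : nat) w := ssrnat.iter t astep (ainit w).

Lemma ainit_abs w : ainit w = absc (init_config M w) 0.
Proof.
rewrite /ainit /absc /init_config; congr AC.
apply: functional_extensionality => p; rewrite /tapeof.
case: (Z.eqb_spec p 0) => [->|Hp] /=; first by case: (map _ w).
case: (Z.ltb_spec p 0) => Hlt.
- have -> : (0 <=? p)%Z = false by apply/Z.leb_gt. by case: (Z.to_nat _).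
- have -> : (0 <=? p)%Z = true by apply/Z.leb_le.
  have -> : Z.to_nat p = (Z.to_nat (p - 0 - 1)).+1 by lia.
  by case: (map _ w) => [|? ?]; rewrite ?nth_nil.
Qed.

Lemma arun_state t w : aq (arun t w) = config_state (run M t w).
Proof.
have : exists h, arun t w = absc (run M t w) h.
  elim: t => [|t [h IH]]; first by exists 0%Z; rewrite /arun /= ainit_abs.
  have [h' E] := abs_step (run M t w) h.
  by exists h'; rewrite /arun /run !iterS -/(arun t w) IH E.
by case=> h ->; case: (run M t w) => [[[q l] a] r].
Qed.

Lemma astep_halt c : halting (aq c) -> astep c = c.
Proof. by rewrite /astep => ->. Qed.

Lemma astep_head c : (Z.abs (ah (astep c) - ah c) <= 1)%Z.
Proof.
rewrite /astep; case: (halting _); first lia.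
case: (tm_delta _ _ _) => [[q' b] []] /=; lia.
Qed.

Lemma astep_tape c p : p <> ah c -> af (astep c) p = af c p.
Proof.
rewrite /astep; case: (halting _) => // Hp.
case: (tm_delta _ _ _) => [[q' b] m] /=; rewrite /upd.
by case: (Z.eqb_spec p (ah c)).
Qed.

Definition isrun (c : nat -> aconf) := forall t, c t.+1 = astep (c t).

Lemma run_absorb c a j : isrun c -> halting (aq (c a)) -> c (a + j)%nat = c a.
Proof.
move=> Hr Hh; elim: j => [|j IH]; first by rewrite addn0.
by rewrite addnS Hr IH astep_halt.
Qed.

Definition sd (s : bool) (b p : Z) : bool := ((p <? b)%Z == s).

Lemma sd_shift s b d p : sd s (b + d) (p + d) = sd s b p.
Proof.
rewrite /sd; congr (_ == _).
case: (Z.ltb_spec (p + d) (b + d)); case: (Z.ltb_spec p b) => //; lia.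
Qed.

Definition cross (c : nat -> aconf) b t : bool :=
  ((ah (c t) <? b)%Z) != ((ah (c t.+1) <? b)%Z).
Definition cs (c : nat -> aconf) b T : seq Q :=
  [seq aq (c t.+1) | t <- iota 0 T & cross c b t].

Lemma csS c b T : cs c b T.+1 = cs c b T ++ (if cross c b T then [:: aq (c T.+1)] else [::]).
Proof.
rewrite /cs; have -> : iota 0 T.+1 = iota 0 T ++ [:: T] by rewrite -addn1 iotaD.
by rewrite filter_cat map_cat /=; case: (cross c b T).
Qed.

Lemma cs_prefix c b T1 T2 : (T1 <= T2)%nat -> exists s, cs c b T2 = cs c b T1 ++ s.
Proof.
move=> /subnKC <-; elim: (T2 - T1)%nat => [|k [s IH]]; first by exists [::]; rewrite addn0 cats0.
by rewrite addnS csS IH -catA; eexists.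
Qed.

Lemma prefix_eq (L a1 a2 s1 s2 : seq Q) : L = a1 ++ s1 -> L = a2 ++ s2 -> size a1 = size a2 -> a1 = a2.
move=> E1 E2 Hs.
have h1 : take (size a1) L = a1 by rewrite E1 take_size_cat.
have h2 : take (size a2) L = a2 by rewrite E2 take_size_cat.
by rewrite -h1 -h2 Hs. Qed.

Definition agree (s : bool) (bz dA : Z) (cz cA : aconf) :=
  [/\ aq cz = aq cA, ah cA = (ah cz + dA)%Z, sd s bz (ah cz) &
      forall p, sd s bz p -> af cz p = af cA (p + dA)%Z].

Lemma agree_step s bz dA cz cA : agree s bz dA cz cA ->
  [/\ aq (astep cz) = aq (astep cA), ah (astep cA) = (ah (astep cz) + dA)%Z &
      forall p, sd s bz p -> af (astep cz) p = af (astep cA) (p + dA)%Z].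
Proof.
case=> Hq Hh Hs Ht; rewrite /astep -Hq.
case: (halting (aq cz)) => //.
have Ha : af cz (ah cz) = af cA (ah cA) by rewrite Hh Ht.
rewrite -Ha; case: (tm_delta _ _ _) => [[q' b] m] /=; split => //; first lia.
move=> p Hp; rewrite /upd Hh.
case: (Z.eqb_spec p (ah cz)); case: (Z.eqb_spec (p + dA) (ah cz + dA)) => //; try lia.
by move=> _ _; apply: Ht.
Qed.

Lemma cross_pos s b h h' : sd s b h -> ~~ sd s b h' -> (Z.abs (h' - h) <= 1)%Z ->
  h' = (if s then b else b - 1)%Z.
Proof. rewrite /sd; case: s; case: Z.ltb_spec; case: Z.ltb_spec => //=; lia. Qed.

Lemma sd_neg s b p : sd (~~ s) b p = ~~ sd s b p.
Proof. by rewrite /sd; case: s; case: (p <? b)%Z. Qed.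

Lemma cross_sd s c b t : cross c b t = (sd s b (ah (c t)) != sd s b (ah (c t.+1))).
Proof. by rewrite /cross /sd; case: s; case: (ah (c t) <? b)%Z; case: (ah (c t.+1) <? b)%Z. Qed.

Lemma frozen c s b a k : isrun c -> (forall j, (a <= j <= a + k)%nat -> sd s b (ah (c j))) ->
  forall p, ~~ sd s b p -> af (c (a + k).+1) p = af (c a) p.
Proof.
move=> Hr; elim: k => [|k IH] Hj p Hp.
- rewrite addn0 Hr astep_tape // => E.
  have Ha : sd s b (ah (c a)) by apply: Hj; rewrite addn0 leqnn.
  by move: Hp; rewrite E Ha.
- rewrite addnS Hr astep_tape; last first.
    move=> E; have Ha : sd s b (ah (c (a + k).+1)) by apply: Hj; rewrite -addnS leq_addr leqnn.
    by move: Hp; rewrite E Ha.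
  rewrite IH // => j /andP [H1 H2]; apply: Hj; rewrite H1 /=; apply: (leq_trans H2); by rewrite addnS.
Qed.

Lemma next_cross B bB s T : isrun B -> forall n bb, (bb + n = T)%nat -> sd s bB (ah (B bb)) ->
  (size (cs B bB bb) < size (cs B bB T))%nat ->
  exists e, [/\ (bb <= e < T)%nat, cs B bB e = cs B bB bb, cross B bB e &
     forall j, (bb <= j <= e)%nat -> sd s bB (ah (B j))].
Proof.
move=> Hr; elim=> [|n IH] bb Hn Hs Hlt.
  by move: Hlt; rewrite -Hn addn0 ltnn.
case Hc: (cross B bB bb).
  exists bb; split => //; first by rewrite leqnn -Hn addnS ltnS leq_addr.
  by move=> j; rewrite -eqn_leq => /eqP <-.
have Hcs : cs B bB bb.+1 = cs B bB bb by rewrite csS Hc cats0.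
have Hs' : sd s bB (ah (B bb.+1)).
  by move: Hc; rewrite (cross_sd s) Hs; case: (sd s bB _).
have H' : (bb.+1 + n = T)%nat by rewrite addSnnS.
have Hlt' : (size (cs B bB bb.+1) < size (cs B bB T))%nat by rewrite Hcs.
have [e [H1 H2 H3 H4]] := IH bb.+1 H' Hs' Hlt'.
exists e; split => //.
- by move: H1; case/andP => /ltnW -> ->.
- by rewrite H2 Hcs.
- move=> j /andP [Hj1 Hj2]; case: (ltngtP bb j) Hj1 => // Hbj _.
  + by apply: H4; rewrite Hbj Hj2.
  + by rewrite -Hbj.
Qed.

Definition InvG s bz (A : nat -> aconf) dA a (B : nat -> aconf) dB bb (cz : aconf) :=
 [/\ agree s bz dA cz (A a),
     forall p, ~~ sd s bz p -> af cz p = af (B bb) (p + dB)%Z,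
     sd s (bz + dB) (ah (B bb)) & cs A (bz + dA) a = cs B (bz + dB) bb].

Set Bullet Behavior "Strict Subproofs".
Lemma invG_step s bz A dA a B dB bb z t XA XB :
 isrun A -> isrun B -> isrun z ->
 halting (aq (A XA)) -> cs A (bz + dA) XA = cs B (bz + dB) XB -> (a <= XA)%nat -> (bb <= XB)%nat ->
 ~~ halting (aq (z t)) -> InvG s bz A dA a B dB bb (z t) ->
 (a < XA)%nat /\ (InvG s bz A dA a.+1 B dB bb (z t.+1) \/
  exists e, (bb < e <= XB)%nat /\ InvG (~~s) bz B dB e A dA a.+1 (z t.+1)).
Proof.
move=> HA HB Hz HXA Hcs HaX HbX Hnh [Hag Hpas HBs HcsAB].
have Hag0 := Hag; case: Hag0 => Hq Hh Hs Ht.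
have HaXA : (a < XA)%nat.
  rewrite ltn_neqAle HaX andbT; apply/eqP => E; move: Hnh; by rewrite Hq E HXA.
split => //.
have [Hq' Hh' Ht'] := agree_step Hag.
rewrite -Hz -HA in Hq' Hh' Ht'.
have Hpas' : forall p, ~~ sd s bz p -> af (z t.+1) p = af (B bb) (p + dB)%Z.
  move=> p Hp; rewrite Hz astep_tape; first exact: Hpas.
  by move=> E; move: Hp; rewrite E Hs.
have HcrA : cross A (bz + dA) a = ~~ sd s bz (ah (z t.+1)).
  by rewrite (cross_sd s) Hh Hh' !sd_shift Hs.
case Hs': (sd s bz (ah (z t.+1))).
- left; split => //.
  + by rewrite csS HcrA Hs' cats0 HcsAB.
- right.
  have HzP : ah (z t.+1) = (if s then bz else bz - 1)%Z.
    apply: (cross_pos Hs); first by rewrite Hs'.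
    by rewrite Hz; apply: astep_head.
  have HcsA1 : cs A (bz + dA) a.+1 = cs A (bz + dA) a ++ [:: aq (A a.+1)] by rewrite csS HcrA Hs'.
  have [sA EA] := cs_prefix A (bz + dA) HaXA.
  have [n0 En0] : exists n0, (bb + n0 = XB)%nat by exists (XB - bb)%nat; rewrite subnKC.
  have Hsz : (size (cs B (bz + dB) bb) < size (cs B (bz + dB) XB))%nat.
    rewrite -Hcs EA HcsA1 -HcsAB !size_cat /=; lia.
  have [e0 [He1 He2 He3 He4]] := next_cross HB En0 HBs Hsz.
  have Hcse : cs B (bz + dB) e0.+1 = cs A (bz + dA) a ++ [:: aq (B e0.+1)].
    by rewrite csS He3 He2 HcsAB.
  case/andP: He1 => He1 He1'.
  have [sB EB] := cs_prefix B (bz + dB) He1'.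
  have Hlast : cs A (bz + dA) a.+1 = cs B (bz + dB) e0.+1.
    apply: (prefix_eq (L := cs A (bz + dA) XA)) EA _ _.
      by rewrite Hcs EB.
    by rewrite HcsA1 Hcse !size_cat.
  have HqB : aq (A a.+1) = aq (B e0.+1).
    by move: Hlast; rewrite HcsA1 Hcse => /(congr1 (last (aq (A a.+1)))); rewrite !last_cat.
  have HBh : ah (B e0.+1) = (if s then bz + dB else bz + dB - 1)%Z.
    apply: (cross_pos (He4 e0 _)); first by rewrite He1 leqnn.
      by move: He3; rewrite (cross_sd s) (He4 e0) ?He1 ?leqnn //; case: (sd s _ _).
    by rewrite HB; apply: astep_head.
  exists e0.+1; split; first by rewrite ltnS He1.
  split.
  + split.
    * by rewrite Hq' HqB.
    * rewrite HBh HzP; clear -s; case: s; lia.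
    * by rewrite sd_neg Hs'.
    * move=> p; rewrite sd_neg => Hp; rewrite Hpas' //.
      have := frozen (s := s) (b := bz + dB) (a := bb) (k := (e0 - bb)%nat) HB.
      rewrite subnKC // => -> //; rewrite ?sd_shift //.

  + by move=> p; rewrite sd_neg negbK => Hp; apply: Ht'.
  + by rewrite sd_neg Hh' sd_shift Hs'.
  + by rewrite Hlast.
Qed.

Lemma inv_halt s bz A dA a B dB bb cz XA qf : isrun A -> (a <= XA)%nat -> aq (A XA) = qf ->
  InvG s bz A dA a B dB bb cz -> halting (aq cz) -> aq cz = qf.
Proof.
move=> HA Ha HX [[Hq _ _ _] _ _ _] Hh; rewrite Hq in Hh *.
by rewrite -HX -(subnKC Ha) run_absorb.
Qed.

Lemma cutpaste x y z bz dB XA XB qf :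
  isrun x -> isrun y -> isrun z ->
  halting qf -> aq (x XA) = qf -> aq (y XB) = qf ->
  cs x (bz + 0) XA = cs y (bz + dB) XB ->
  InvG true bz x 0 0 y dB 0 (z 0) ->
  exists t, aq (z t) = qf.
Proof.
move=> Hx Hy Hz Hqf HxX HyX Hcs H0.
pose J t := exists a bb, [/\ (t <= a + bb)%nat, (a <= XA)%nat, (bb <= XB)%nat &
   InvG true bz x 0 a y dB bb (z t) \/ InvG false bz y dB bb x 0 a (z t)].
suff : forall t, (exists t', aq (z t') = qf) \/ J t.
  move=> /(_ (XA + XB).+1) [//|[a [bb [H1 H2 H3 _]]]].
  by move: H1; rewrite ltnNge leq_add.
elim=> [|t [IH|[a [bb [H1 H2 H3 H4]]]]]; [right|by left|].
  by exists 0%nat, 0%nat; split => //; left.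
case Hh: (halting (aq (z t))).
  { left; exists t; case: H4 => H4.
    - exact: (inv_halt Hx H2 HxX H4 Hh).
    - exact: (inv_halt Hy H3 HyX H4 Hh). }
right; have HhX : halting (aq (x XA)) by rewrite HxX.
have HhY : halting (aq (y XB)) by rewrite HyX.
case: H4 => H4.
- have [Ha [H5|[e [He H5]]]] := invG_step Hx Hy Hz HhX Hcs H2 H3 (negbT Hh) H4.
  + by exists a.+1, bb; split; [rewrite addSn ltnS | | | left].
  + exists a.+1, e; split; [ | by [] | by case/andP: He | by right].
    case/andP: He => He _; lia.
- have [Ha [H5|[e [He H5]]]] := invG_step Hy Hx Hz HhY (esym Hcs) H3 H2 (negbT Hh) H4.
  + by exists a, bb.+1; split; [rewrite addnS ltnS | | | right].
  + exists e, bb.+1; split; [ | by case/andP: He | by [] | by left].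
    case/andP: He => He _; lia.
Qed.
End Abs.

Set Bullet Behavior "Strict Subproofs".

Lemma nthSome_none (Q : Type) (l : seq Q) i : ~~ isSome (nth None (map Some l) i) = (size l <= i).
Proof. by elim: l i => [|x l IH] [|i] //=; rewrite IH. Qed.

Lemma card_lists (Q : finType) (L : nat) (s : seq (seq Q)) :
  uniq s -> all (fun l => size l <= L) s -> size s <= expn (#|Q|.+1) L.
Proof.
move=> Hu Hall.
pose pad (l : seq Q) : {ffun 'I_L -> option Q} := [ffun i : 'I_L => nth None (map Some l) (nat_of_ord i)].
have Hinj : {in s &, injective pad}.
  move=> l1 l2 H1 H2 E.
  have Hn : forall i, i < L -> nth None (map Some l1) i = nth None (map Some l2) i.
    by move=> i Hi; move: (congr1 (fun f : {ffun 'I_L -> option Q} => f (Ordinal Hi)) E); rewrite !ffunE.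
  have S1 := allP Hall _ H1; have S2 := allP Hall _ H2.
  have Hsz : size l1 = size l2.
    apply/eqP; rewrite eqn_leq; apply/andP; split; rewrite leqNgt; apply/negP => Hlt.
    { have := Hn (size l2) (leq_trans Hlt S1).
      move/(congr1 (fun o => ~~ isSome o)); rewrite !nthSome_none leqnn.
      by rewrite leqNgt Hlt. }
    { have := Hn (size l1) (leq_trans Hlt S2).
      move/(congr1 (fun o => ~~ isSome o)); rewrite !nthSome_none leqnn.
      by rewrite leqNgt Hlt. }
  have : map Some l1 = map Some l2.
    apply: (eq_from_nth (x0 := None)); first by rewrite !size_map.
    by move=> i; rewrite size_map => Hi; apply: Hn; apply: leq_trans Hi S1.
  by apply: inj_map => x y [].
have Hu' : uniq (map pad s) by rewrite map_inj_in_uniq.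
have := max_card (mem (map pad s)).
by rewrite (card_uniqP Hu') size_map card_ffun card_option card_ord.
Qed.

Lemma count_bound (T : eqType) (Q : finType) (E : seq T) (f : T -> seq Q) L :
  uniq E -> {in E &, injective f} ->
  L.+1 * (size E - expn (#|Q|.+1) L) <= \sum_(g <- E) size (f g).
Proof.
move=> Hu Hinj.
set P := fun g => size (f g) <= L.
have Hs : count P E <= expn (#|Q|.+1) L.
  rewrite -size_filter -(size_map f); apply: card_lists.
  { rewrite map_inj_in_uniq ?filter_uniq //.
    by move=> x y; rewrite !mem_filter => /andP [_ Hx] /andP [_ Hy]; apply: Hinj. }
  { by apply/allP => l /mapP [g]; rewrite mem_filter => /andP [Hg _] ->. }
rewrite (bigID P) /=.
apply: leq_trans (leq_addl _ _).
apply: (@leq_trans (\sum_(g <- E | ~~ P g) L.+1)).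
  rewrite big_const_seq iter_addn_0 leq_mul2l; apply/orP; right.
  rewrite -(count_predC P E); have -> : count (predC P) E = count (fun i => ~~ P i) E by [].
  set X := expn _ _ in Hs *; move: Hs; generalize (count P E) (count (fun i => ~~ P i) E) => a b; lia.
by apply: leq_sum => g; rewrite /P ltnNge.
Qed.

Lemma sum_le1 (L : nat) (P : 'I_L -> bool) :
  (forall i j, P i -> P j -> i = j) -> \sum_(i < L) (P i : nat) <= 1.
Proof.
move=> Hu; case: (pickP P) => [i0 Hi0|Hn].
- rewrite (bigD1 i0) //= Hi0 big1 // => j Hj.
  by case Hp: (P j) => //; move: Hj; rewrite (Hu _ _ Hp Hi0) eqxx.
- by rewrite big1 // => i _; rewrite Hn.
Qed.

Set Bullet Behavior "Strict Subproofs".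

Lemma cross_unique (Sigma : finType) (M : TM Sigma) (c : nat -> aconf M) b b' t :
  isrun c -> cross c b t -> cross c b' t -> b = b'.
Proof.
rewrite /cross => Hr; rewrite Hr; have := astep_head (c := c t).
case: (Z.ltb_spec (ah (c t)) b); case: (Z.ltb_spec (ah (astep (c t))) b);
case: (Z.ltb_spec (ah (c t)) b'); case: (Z.ltb_spec (ah (astep (c t))) b') => //=; lia.
Qed.

Lemma size_cs (Sigma : finType) (M : TM Sigma) (c : nat -> aconf M) b Tm :
  size (cs c b Tm) = \sum_(t <- iota 0 Tm) (cross c b t : nat).
Proof. by rewrite size_map size_filter -sum1_count big_mkcond. Qed.

Lemma sum_cs_bound (Sigma : finType) (M : TM Sigma) (c : nat -> aconf M) (b0 : Z) L Tm :
  isrun c -> \sum_(i < L) size (cs c (b0 + Z.of_nat i.+1) Tm) <= Tm.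
Proof.
move=> Hr.
under eq_bigr => i _ do rewrite size_cs.
rewrite exchange_big /=.
apply: (@leq_trans (\sum_(t <- iota 0 Tm) 1)); last by rewrite sum1_size size_iota.
apply: leq_sum => t _; apply: sum_le1 => i j Hi Hj.
apply: ord_inj; have := cross_unique Hr Hi Hj; lia.
Qed.

Set Bullet Behavior "Strict Subproofs".

Section Words2.
Variables (G : groupType) (Sigma : finType) (ev : Sigma -> G).
Local Open Scope group_scope.

Lemma word_eval_cat u v : word_eval ev (u ++ v) = word_eval ev u * word_eval ev v.
Proof. by elim: u => [|x u IH] /=; rewrite ?mul1g // IH mulgA. Qed.

Lemma mem_wol k w : w \in words_of_length Sigma k -> size w = k.
Proof.
elim: k w => [|k IH] w /=; first by rewrite inE => /eqP ->.
by case/allpairsP => [[x w'] [_ /= Hw' ->]] /=; rewrite (IH _ Hw').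
Qed.

Lemma mem_wup n w : w \in words_upto Sigma n -> (size w <= n)%nat.
Proof.
by case/flatten_mapP => k; rewrite mem_iota add0n ltnS => Hk /mem_wol ->.
Qed.

Variable inv : Sigma -> Sigma.
Hypothesis Hinv : forall s, ev (inv s) = (ev s)^-1.

Definition invw (u : seq Sigma) := rev (map inv u).
Lemma invw_eval u : word_eval ev (invw u) = (word_eval ev u)^-1.
Proof.
elim: u => [|x u IH]; first by rewrite /= invg1.
by rewrite /invw /= rev_cons -cats1 word_eval_cat -/(invw u) IH /= mulg1 Hinv invgM.
Qed.
Lemma size_invw u : size (invw u) = size u.
Proof. by rewrite /invw size_rev size_map. Qed.

Variable s0 : Sigma.
Definition pad n := flatten (nseq n [:: s0; inv s0]).
Lemma pad_eval n : word_eval ev (pad n) = 1.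
Proof.
elim: n => [//|n IH]; rewrite /pad /= -/(pad n) /=.
by rewrite IH Hinv !mulg1 mulgV.
Qed.
Lemma size_pad n : size (pad n) = (2 * n)%nat.
Proof. elim: n => [//|n IH]; rewrite /pad /= -/(pad n) IH; lia. Qed.

Definition Wn n := words_upto Sigma n.
Definition En n := undup [seq word_eval ev w | w <- Wn n].
Definition ug n g := nth [::] (Wn n) (find (fun w => word_eval ev w == g) (Wn n)).
Lemma ug_spec n g : g \in En n -> word_eval ev (ug n g) = g /\ (size (ug n g) <= n)%nat.
Proof.
rewrite mem_undup => /mapP [w Hw ->].
have Hh : has (fun w' => word_eval ev w' == word_eval ev w) (Wn n).
  by apply/hasP; exists w.
split; first by apply/eqP; apply: (nth_find [::] Hh).
by apply: mem_wup; apply: mem_nth; rewrite -has_find.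
Qed.
Definition wg n g := ug n g ++ pad n ++ invw (ug n g).
Lemma wg_eval n g : word_eval ev (wg n g) = 1.
Proof. by rewrite /wg !word_eval_cat pad_eval invw_eval mul1g mulgV. Qed.
Lemma size_wg n g : size (wg n g) = (2 * size (ug n g) + 2 * n)%nat.
Proof. rewrite /wg !size_cat size_pad size_invw; lia. Qed.
End Words2.

Set Bullet Behavior "Strict Subproofs".

Lemma nth_map_prefix (A B : Type) (f : A -> B) d (s t1 t2 : seq A) i :
  (i < size s)%nat -> nth d (map f (s ++ t1)) i = nth d (map f (s ++ t2)) i.
Proof. by move=> Hi; rewrite !map_cat !nth_cat size_map Hi. Qed.

Lemma nth_map_suffix (A B : Type) (f : A -> B) d (s1 s2 t : seq A) k :
  nth d (map f (s1 ++ t)) (size s1 + k) = nth d (map f (s2 ++ t)) (size s2 + k).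
Proof. by rewrite !map_cat !nth_cat !size_map !ltnNge !leq_addr /= !addKn. Qed.

Lemma arun_isrun (Sigma : finType) (M : TM Sigma) w : isrun (fun t => arun M t w).
Proof. by move=> t; rewrite /arun iterS. Qed.

Section Core.
Variables (G : groupType) (Sigma : finType) (ev : Sigma -> G).
Variable inv : Sigma -> Sigma.
Hypothesis Hinv : forall s, ev (inv s) = (ev s)^-1%g.
Variable s0 : Sigma.
Variable M : TM Sigma.
Hypothesis Hacc : tm_acc M != tm_rej M.
Variable T : nat -> nat.
Hypothesis Hdec : decides_in_time M (word_problem ev) T.

Lemma arun_dec w : aq (arun M (T (size w)) w) = if word_problem ev w then tm_acc M else tm_rej M.
Proof. by rewrite arun_state Hdec. Qed.

Definition csg n c g := cs (fun t => arun M t (wg ev inv s0 n g))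
  (Z.of_nat (size (ug ev n g)) + Z.of_nat c)%Z (T (size (wg ev inv s0 n g))).

Lemma csg_inj n c : (1 <= c <= 2 * n)%nat -> {in En ev n &, injective (csg n c)}.
Proof.
move=> /andP [Hc1 Hc2] g g' Hg Hg' Hcs.
case: (eqVneq g g') => // Hne; exfalso.
have [Eu Su] := ug_spec Hg; have [Eu' Su'] := ug_spec Hg'.
set u := ug ev n g in Eu Su Hcs; set u' := ug ev n g' in Eu' Su' Hcs.
set zw := u ++ pad inv s0 n ++ invw inv u'.
have Hz : word_problem ev zw = false.
  rewrite /word_problem !word_eval_cat (pad_eval Hinv) (invw_eval Hinv) Eu Eu' mul1g.
  by rewrite mulg_eq1 invgK; apply/negbTE.
have Hwg : forall h, word_problem ev (wg ev inv s0 n h).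
  by move=> h; rewrite /word_problem wg_eval.
set bz := (Z.of_nat (size u) + Z.of_nat c)%Z.
set dB := (Z.of_nat (size u') - Z.of_nat (size u))%Z.
have Hcs' : cs (fun t => arun M t (wg ev inv s0 n g)) (bz + 0) (T (size (wg ev inv s0 n g))) =
            cs (fun t => arun M t (wg ev inv s0 n g')) (bz + dB) (T (size (wg ev inv s0 n g'))).
  have -> : (bz + 0 = bz)%Z by lia.
  have -> : (bz + dB = Z.of_nat (size u') + Z.of_nat c)%Z by rewrite /bz /dB; lia.
  exact: Hcs.
have Hinit : InvG true bz (fun t => arun M t (wg ev inv s0 n g)) 0 0
                (fun t => arun M t (wg ev inv s0 n g')) dB 0 (arun M 0 zw).
  { split.
  - split => //.
    + rewrite /sd /=; apply/eqP; apply/Z.ltb_lt; rewrite /bz; lia.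
    + move=> p; rewrite /sd Z.add_0_r /= => /eqP /Z.ltb_lt Hp.
      case: (0 <=? p)%Z => //.
      rewrite /zw /wg -/u !catA; apply: nth_map_prefix.
      rewrite size_cat size_pad; rewrite /bz in Hp; lia.
  - move=> p; rewrite /sd /= => /eqP Hp; have Hp' : (bz <= p)%Z by apply/Z.ltb_ge; case: (p <? bz)%Z Hp.
    have -> : (0 <=? p)%Z = true by apply/Z.leb_le; rewrite /bz in Hp'; lia.
    have -> : (0 <=? p + dB)%Z = true by apply/Z.leb_le; rewrite /bz /dB in Hp'; lia.
    have E1 : Z.to_nat p = (size u + (Z.to_nat p - size u))%nat by rewrite /bz in Hp'; lia.
    have E2 : Z.to_nat (p + dB) = (size u' + (Z.to_nat p - size u))%nat by rewrite /bz /dB in Hp'; lia.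
    rewrite E1 E2 /zw /wg -/u'; exact: nth_map_suffix.
  - rewrite /sd; have -> : ah (arun M 0 (wg ev inv s0 n g')) = 0%Z by [].
    apply/eqP; apply/Z.ltb_lt; rewrite /bz /dB; lia.
  - by []. }
have Hacc1 : forall h, aq (arun M (T (size (wg ev inv s0 n h))) (wg ev inv s0 n h)) = tm_acc M.
  by move=> h; rewrite arun_dec Hwg.
have Hhalt : halting (tm_acc M) by rewrite /halting eqxx.
have [t Ht] := cutpaste (arun_isrun M (wg ev inv s0 n g)) (arun_isrun M (wg ev inv s0 n g'))
  (arun_isrun M zw) Hhalt (Hacc1 g) (Hacc1 g') Hcs' Hinit.
have Hd : aq (arun M (T (size zw)) zw) = tm_rej M by rewrite arun_dec Hz.
set Tz := T (size zw) in Hd.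
case: (leqP t Tz) => Ht2.
- have Hh1 : halting (aq (arun M t zw)) by rewrite Ht.
  have E : arun M Tz zw = arun M t zw.
    by have := run_absorb (Tz - t) (arun_isrun M zw) Hh1; rewrite subnKC.
  move/eqP: Hacc; apply; rewrite -Ht; apply: (etrans _ Hd); by rewrite E.
- have Hhr : halting (aq (arun M Tz zw)) by rewrite Hd /halting eqxx orbT.
  have E : arun M t zw = arun M Tz zw.
    have Hle : (Tz <= t)%nat := ltnW Ht2.
    by have := run_absorb (t - Tz) (arun_isrun M zw) Hhr; rewrite subnKC.
  move/eqP: Hacc; apply; rewrite -Ht; apply: (etrans _ Hd); by rewrite E.
Qed.
End Core.

Set Bullet Behavior "Strict Subproofs".

Lemma INR_expn m k : INR (expn m k) = (INR m ^ k)%R.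
Proof. elim: k => [|k IH]; first by rewrite expn0. by rewrite expnS -multE mult_INR IH. Qed.

Lemma natpow2 s : Nat.pow s 2 = (s * s)%nat.
Proof. by rewrite /= -multE; lia. Qed.

Theorem mainTheorem4 (G : groupType) (Sigma : finType) (ev : Sigma -> G) :
  finite_symmetric_generating_set ev ->
  exponential_growth ev ->
  ~ DTIME1_o_n2 (word_problem ev).
Proof.
move=> [_ [Hsym _]] [a [Ha1 Hgrow]] [M [[_ [_ Hacc]] [T [Ho Hdec]]]].
pose inv s := odflt s [pick s' | ev s' == (ev s)^-1%g].
have Hinv : forall s, ev (inv s) = (ev s)^-1%g.
  move=> s; rewrite /inv; case: pickP => [s' /eqP //|H].
  by case: (Hsym s) => s' E; move: (H s'); rewrite E eqxx.
have [s0 _] : exists s0 : Sigma, true.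
  case: (pickP (fun _ : Sigma => true)) => [s0 _|Hn]; first by exists s0.
  exfalso.
  have Hg1 : (growth ev 1 <= 1)%nat.
    rewrite /growth; apply: (@leq_trans (size [:: 1%g])) => //.
    apply: uniq_leq_size; first exact: undup_uniq.
    move=> g; rewrite mem_undup => /mapP [w Hw ->].
    case: w Hw => [|x w] Hw; first by rewrite inE.
    by move: (Hn x).
  have H1 := Hgrow 1%nat; have H2 := le_INR _ _ (elimT leP Hg1).
  rewrite pow_1 in H1; simpl INR in H2; lra.
set K := #|tm_state M|.
set B := (2 * K.+1)%nat.
have Ha' : (Rabs a > 1)%R by rewrite Rabs_pos_eq; lra.
have [N0 HN0] := Pow_x_infinity a Ha' (INR B).
set r := N0.+1.
have Hr : (INR B <= a ^ r)%R.
  have := HN0 r (elimT leP (leqnSn N0)); rewrite Rabs_pos_eq; first lra.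
  apply: pow_le; lra.
have [N1 HN1] := Ho (16 * r)%nat.
set L := N1.+1.
set n := (r * L)%nat.
have Hm : (expn B L <= growth ev n)%nat.
  apply/leP; apply: INR_le; rewrite INR_expn; apply: Rle_trans (Hgrow n).
  rewrite /n pow_mult; apply: pow_incr; split; [apply: pos_INR | exact: Hr].
set E := En ev n.
have HsE : size E = growth ev n by [].
set X := expn K.+1 L.
have HX1 : (1 <= X)%nat by rewrite /X expn_gt0.
have HmX : (2 * X <= size E)%nat.
  rewrite HsE; apply: leq_trans Hm.
  rewrite /B expnMn /L expnS -mulnA /X leq_mul2l /=.
  by rewrite -{1}(mul1n (expn K.+1 N1.+1)) leq_mul2r expn_gt0 orbT.
pose F g i := size (csg ev inv s0 M T n i g).
have S1 : forall i : 'I_(2 * n), (L.+1 * (size E - X) <= \sum_(g <- E) F g i.+1)%nat.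
  move=> i; apply: count_bound; first exact: undup_uniq.
  apply: (csg_inj (s0 := s0) Hinv Hacc Hdec); by rewrite ltn_ord.
have S2 : forall g, g \in E -> (\sum_(i < 2 * n) F g i.+1 <= T (size (wg ev inv s0 n g)))%nat.
  move=> g _; exact: (sum_cs_bound (Z.of_nat (size (ug ev n g))) (2 * n) _ (arun_isrun M _)).
have S3 : forall g, g \in E -> (16 * r * T (size (wg ev inv s0 n g)) <= 16 * n * n)%nat.
  move=> g Hg; have [_ Su] := ug_spec Hg.
  have Hs := size_wg ev inv s0 n g.
  have Hn1 : (N1 <= size (wg ev inv s0 n g))%nat.
    rewrite Hs /n /L; have : (0 < r)%nat by []; nia.
  have := HN1 _ Hn1; rewrite natpow2 => H.
  apply: leq_trans H _; rewrite Hs.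
  have : (size (ug ev n g) <= n)%nat := Su; nia.
set S := \sum_(g <- E) T (size (wg ev inv s0 n g)).
have HA : (2 * n * (L.+1 * (size E - X)) <= S)%nat.
  apply: (@leq_trans (\sum_(i < 2 * n) \sum_(g <- E) F g i.+1)).
    have -> : (2 * n * (L.+1 * (size E - X)) = \sum_(i < 2 * n) (L.+1 * (size E - X)))%nat.
      by rewrite big_const_ord iter_addn_0 mulnC.
    by apply: leq_sum => i _; exact: S1.
  rewrite exchange_big /= /S !big_seq.
  by apply: leq_sum => g Hg; apply: S2.
have HB : (16 * r * S <= size E * (16 * n * n))%nat.
  rewrite /S big_distrr /=.
  have -> : (size E * (16 * n * n) = \sum_(g <- E) (16 * n * n))%nat.
    by rewrite big_const_seq count_predT iter_addn_0 mulnC.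
  rewrite !big_seq; apply: leq_sum => g Hg; exact: S3 g Hg.
set Y := (size E - X)%nat.
have HY : (size E <= 2 * Y)%nat by rewrite /Y; lia.
have HY1 : (1 <= Y)%nat by rewrite /Y; lia.
have Hr1 : (1 <= r)%nat by [].
have HL1 : (1 <= L)%nat by [].
have h1 : (16 * r * (2 * n * (L.+1 * Y)) <= 16 * r * S)%nat by rewrite leq_mul2l HA orbT.
have h2 : (size E * (16 * n * n) <= 2 * Y * (16 * n * n))%nat by rewrite leq_mul2r HY orbT.
have h3 := leq_trans h1 (leq_trans HB h2).
have E1 : (16 * r * (2 * n * (L.+1 * Y)) = (32 * n * Y) * (r * L.+1))%nat by lia.
have E2 : (2 * Y * (16 * n * n) = (32 * n * Y) * n)%nat by lia.
rewrite E1 E2 leq_pmul2l in h3; last first.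
  rewrite /n; nia.
move: h3; rewrite /n; nia.
Qed.
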